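(* Let $\gamma\in(0,1)$ and let $\alpha_0,\alpha_1,\dots\in[0,1]$. Define $\delta^1=\alpha_0$, $\lambda^1=\alpha_0^2$ and, for $n>1$, $$\delta^n=\alpha_{n-1}+\big(1-(1-\gamma)\alpha_{n-1}\big)\delta^{n-1},\qquad \lambda^n=\alpha_{n-1}^2+\big(1-(1-\gamma)\alpha_{n-1}\big)^2\lambda^{n-1}.$$ Then for all $n\ge1$, $\delta^n\le \frac{1}{1-\gamma}$ and $\lambda^n\le\frac{1}{\gamma(1-\gamma)}$. *)

(* Defs.v *)
From Stdlib Require Import Reals.
Open Scope R_scope.

(* delta_seq g a n and lambda_seq g a n represent the paper's
   delta^n and lambda^n for n >= 1 (the value at n = 0 is an unused filler 0). *)
Fixpoint delta_seq (g : R) (a : nat -> R) (n : nat) : R :=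
  match n with
  | O => 0
  | S O => a O
  | S ((S _) as m) => a m + (1 - (1 - g) * a m) * delta_seq g a m
  end.

Fixpoint lambda_seq (g : R) (a : nat -> R) (n : nat) : R :=
  match n with
  | O => 0
  | S O => (a O) ^ 2
  | S ((S _) as m) => (a m) ^ 2 + ((1 - (1 - g) * a m) ^ 2) * lambda_seq g a m
  end.

(* Main.v *)
Require Import Defs.
From Stdlib Require Import Reals Lra Psatz.
Open Scope R_scope.

Theorem proposition2 (g : R) (a : nat -> R)
  (hg : 0 < g < 1) (ha : forall k : nat, 0 <= a k <= 1) :
  forall n : nat, (1 <= n)%nat ->
    delta_seq g a n <= 1 / (1 - g) /\
    lambda_seq g a n <= 1 / (g * (1 - g)).
Proof.
  intros n Hn. destruct n as [|n]; [lia|]. clear Hn.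
  set (c := 1 - g).
  assert (Hc : 0 < c < 1) by (unfold c; lra).
  assert (E1 : 1 / c = / c) by (unfold Rdiv; ring).
  assert (E2 : 1 / (g * c) = / (g * c)) by (unfold Rdiv; ring).
  fold c; rewrite E1, E2.
  assert (Ic : 1 <= / c).
  { rewrite <- Rinv_1. apply Rinv_le_contravar; lra. }
  assert (Igc : 1 <= / (g*c)).
  { rewrite <- Rinv_1. apply Rinv_le_contravar; nra. }
  assert (Kc : c * / c = 1) by (field; lra).
  assert (Kgc : g * c * / (g*c) = 1) by (field; lra).
  induction n as [|n IH].
  - simpl. destruct (ha 0%nat). split; nra.
  - change (delta_seq g a (S (S n))) with
      (a (S n) + (1 - (1 - g) * a (S n)) * delta_seq g a (S n)).
    change (lambda_seq g a (S (S n))) with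
      ((a (S n))^2 + ((1 - (1 - g) * a (S n))^2) * lambda_seq g a (S n)).
    fold c. destruct IH as [IH1 IH2].
    set (x := a (S n)) in *. assert (Hx : 0 <= x <= 1) by apply ha.
    set (D := delta_seq g a (S n)) in *. set (L := lambda_seq g a (S n)) in *.
    set (M := / (g*c)) in *. set (N := / c) in *.
    assert (Hb : 0 <= 1 - c * x) by nra.
    split.
    + assert ((1 - c*x) * D <= (1 - c*x) * N) by (apply Rmult_le_compat_l; lra).
      nra.
    + assert ((1 - c*x)^2 * L <= (1 - c*x)^2 * M)
        by (apply Rmult_le_compat_l; [nra|lra]).
      assert (Hm : g * M * c = 1) by (unfold M; field; lra).
      assert (x^2 <= M * (1 - (1 - c*x)^2)).
      { assert (M * (1 - (1-c*x)^2) = x * ((2 - c*x) * (M*c))) by ring.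
        assert (M*c = / g) by (unfold M; field; lra).
        assert (1 <= / g) by (rewrite <- Rinv_1; apply Rinv_le_contravar; lra).
        assert (x <= (2 - c*x) * (M*c)) by nra.
        nra. }
      nra.
Qed.
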